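(* Let $(X,d_X)$ and $(Y,d_Y)$ be ultrametric spaces and let $d$ be a partial distance-preserving metric on $X\times Y$ with $d_\infty\le d$. Suppose that $\mathcal N_\varepsilon(W\times Z)=\mathcal N_\varepsilon(W)\cdot\mathcal N_\varepsilon(Z)$ for all compact sets $W\subseteq X$, $Z\subseteq Y$ and every $\varepsilon>0$ (quantities computed in $(X,d_X)$, $(Y,d_Y)$, $(X\times Y,d)$ respectively). Then for all $x_1,x_2\in X$ and $y_1,y_2\in Y$, $$\min\{d((x_1,y_1),(x_2,y_2)),\,d((x_2,y_1),(x_1,y_2))\}=\max\{d_X(x_1,x_2),d_Y(y_1,y_2)\}.$$
   Context: $d_\infty((x_1,y_1),(x_2,y_2))=\max\{d_X(x_1,x_2),d_Y(y_1,y_2)\}$. A metric $d$ on $X\times Y$ is partial distance-preserving if $d((x_1,y),(x_2,y))=d_X(x_1,x_2)$ and $d((x,y_1),(x,y_2))=d_Y(y_1,y_2)$ for all $x,x_1,x_2\in X$, $y,y_1,y_2\in Y$. Ultrametric: $\rho(a,b)\le\max\{\rho(a,c),\rho(c,b)\}$. In a metric space $(M,\rho)$ with closed balls $B(c,r)=\{x:\rho(x,c)\le r\}$, $C$ is an $\varepsilon$-net for $V$ if $V\subseteq\bigcup_{c\in C}B(c,\varepsilon)$, and for totally bounded $V$ the covering number $\mathcal N_\varepsilon(V)$ is the smallest cardinality of a subset of $V$ that is an $\varepsilon$-net for $V$. *)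

(* Defs.v *)
From Stdlib Require Import Reals List.
Import ListNotations.
Open Scope R_scope.

Definition is_metric {M : Type} (d : M -> M -> R) : Prop :=
  (forall x y, 0 <= d x y) /\
  (forall x y, d x y = 0 <-> x = y) /\
  (forall x y, d x y = d y x) /\
  (forall x y z, d x z <= d x y + d y z).

Definition is_ultrametric {M : Type} (d : M -> M -> R) : Prop :=
  is_metric d /\ (forall a b c, d a b <= Rmax (d a c) (d c b)).

Definition is_open {M : Type} (d : M -> M -> R) (U : M -> Prop) : Prop :=
  forall x, U x -> exists r, 0 < r /\ forall y, d x y < r -> U y.

Definition is_compact {M : Type} (d : M -> M -> R) (V : M -> Prop) : Prop :=
  forall (I : Type) (U : I -> M -> Prop),
    (forall i, is_open d (U i)) ->
    (forall x, V x -> exists i, U i x) ->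
    exists l : list I, forall x, V x -> exists i, In i l /\ U i x.

Definition cball {M : Type} (d : M -> M -> R) (c : M) (r : R) : M -> Prop :=
  fun x => d x c <= r.

Definition is_net {M : Type} (d : M -> M -> R) (C : list M) (V : M -> Prop) (eps : R) : Prop :=
  forall v, V v -> exists c, In c C /\ cball d c eps v.

Definition covering_number {M : Type} (d : M -> M -> R) (V : M -> Prop) (eps : R) (n : nat) : Prop :=
  (exists C : list M, NoDup C /\ length C = n /\ (forall c, In c C -> V c) /\ is_net d C V eps) /\
  (forall C : list M, (forall c, In c C -> V c) -> is_net d C V eps -> (n <= length C)%nat).

Definition prod_set {X Y : Type} (W : X -> Prop) (Z : Y -> Prop) : X * Y -> Prop :=
  fun p => W (fst p) /\ Z (snd p).

Definition partial_distance_preserving {X Y : Type} (dX : X -> X -> R) (dY : Y -> Y -> R)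
  (d : X * Y -> X * Y -> R) : Prop :=
  (forall x1 x2 y, d (x1, y) (x2, y) = dX x1 x2) /\
  (forall x y1 y2, d (x, y1) (x, y2) = dY y1 y2).

Definition d_infty {X Y : Type} (dX : X -> X -> R) (dY : Y -> Y -> R) (p q : X * Y) : R :=
  Rmax (dX (fst p) (fst q)) (dY (snd p) (snd q)).

(* Main.v *)
Require Import Defs.
From Stdlib Require Import Reals List Lra Lia.
Open Scope R_scope.

Lemma two_compact {M : Type} (dm : M -> M -> R) (a b : M) :
  is_compact dm (fun x => x = a \/ x = b).
Proof.
  intros I U _ Hc.
  destruct (Hc a (or_introl eq_refl)) as [i1 H1].
  destruct (Hc b (or_intror eq_refl)) as [i2 H2].
  exists (i1 :: i2 :: nil). intros x [-> | ->].
  - exists i1; split; simpl; auto.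
  - exists i2; split; simpl; auto.
Qed.

Lemma two_cov1 {M : Type} (dm : M -> M -> R) (a b : M) (e : R) :
  is_metric dm -> dm a b <= e ->
  covering_number dm (fun x => x = a \/ x = b) e 1.
Proof.
  intros [H0 [Hz [Hs _]]] Hab. split.
  - exists (a :: nil). split; [constructor; [simpl; tauto| constructor]|].
    split; [reflexivity|]. split.
    + intros c [<- | []]; auto.
    + intros v [-> | ->]; exists a; split; simpl; auto; unfold cball.
      * rewrite (proj2 (Hz a a) eq_refl). specialize (H0 a b). lra.
      * rewrite Hs; lra.
  - intros C _ Hn. destruct (Hn a (or_introl eq_refl)) as [c [Hc _]].
    destruct C; simpl in *; [destruct Hc| apply le_n_S, Nat.le_0_l].
Qed.

Theorem proposition4p7 (X Y : Type) (dX : X -> X -> R) (dY : Y -> Y -> R)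
  (d : X * Y -> X * Y -> R)
  (hX : is_ultrametric dX) (hY : is_ultrametric dY)
  (hd : is_metric d) (hpd : partial_distance_preserving dX dY d)
  (hle : forall p q, d_infty dX dY p q <= d p q)
  (hcov : forall (W : X -> Prop) (Z : Y -> Prop) (eps : R),
      is_compact dX W -> is_compact dY Z -> 0 < eps ->
      forall n m : nat, covering_number dX W eps n -> covering_number dY Z eps m ->
      covering_number d (prod_set W Z) eps (n * m)%nat) :
  forall (x1 x2 : X) (y1 y2 : Y),
    Rmin (d (x1, y1) (x2, y2)) (d (x2, y1) (x1, y2)) = Rmax (dX x1 x2) (dY y1 y2).
Proof.
  intros x1 x2 y1 y2.
  destruct hX as [mX _]. destruct hY as [mY _].
  pose proof mX as [X0 [Xz [Xs _]]].
  pose proof mY as [Y0 [Yz [Ys _]]].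
  pose proof hd as [D0 [Dz [Ds _]]].
  set (M := Rmax (dX x1 x2) (dY y1 y2)).
  assert (L1 : M <= d (x1, y1) (x2, y2)) by apply (hle (x1,y1) (x2,y2)).
  assert (L2 : M <= d (x2, y1) (x1, y2)).
  { pose proof (hle (x2,y1) (x1,y2)) as H. unfold d_infty in H; simpl in H.
    rewrite Xs in H. exact H. }
  assert (Ha : dX x1 x2 <= M) by apply Rmax_l.
  assert (Hb : dY y1 y2 <= M) by apply Rmax_r.
  destruct (Req_dec M 0) as [HM | HM].
  - assert (x1 = x2) by (apply Xz; specialize (X0 x1 x2); lra).
    assert (y1 = y2) by (apply Yz; specialize (Y0 y1 y2); lra).
    subst. rewrite (proj2 (Dz (x2,y2) (x2,y2)) eq_refl). rewrite HM.
    unfold Rmin; destruct (Rle_dec 0 0); lra.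
  - assert (HMp : 0 < M) by (specialize (X0 x1 x2); lra).
    pose proof (hcov _ _ M (two_compact dX x1 x2) (two_compact dY y1 y2) HMp 1%nat 1%nat
      (two_cov1 dX x1 x2 M mX Ha) (two_cov1 dY y1 y2 M mY Hb)) as [[C [_ [HL [HC Hn]]]] _].
    destruct C as [|c [|c' C]]; simpl in HL; try discriminate.
    destruct (HC c (or_introl eq_refl)) as [Hcx Hcy].
    destruct c as [cx cy]; simpl in Hcx, Hcy.
    assert (K : d (x1, y1) (x2, y2) <= M \/ d (x2, y1) (x1, y2) <= M).
    { destruct Hcx as [-> | ->]; destruct Hcy as [-> | ->].
      - destruct (Hn (x2,y2) (conj (or_intror eq_refl) (or_intror eq_refl)))
          as [c0 [[<- | []] Hc0]]. unfold cball in Hc0. rewrite Ds in Hc0. auto.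
      - destruct (Hn (x2,y1) (conj (or_intror eq_refl) (or_introl eq_refl)))
          as [c0 [[<- | []] Hc0]]. unfold cball in Hc0. auto.
      - destruct (Hn (x1,y2) (conj (or_introl eq_refl) (or_intror eq_refl)))
          as [c0 [[<- | []] Hc0]]. unfold cball in Hc0. rewrite Ds in Hc0. auto.
      - destruct (Hn (x1,y1) (conj (or_introl eq_refl) (or_introl eq_refl)))
          as [c0 [[<- | []] Hc0]]. unfold cball in Hc0. auto. }
    fold M. unfold Rmin; destruct (Rle_dec _ _); lra.
Qed.
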